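(* Let $G$ be a $d$-regular graph on $n$ vertices and let $k$ be a positive integer with $NPO(k)\le n< NPO(k+1)$. Then the Laplacian matrix $L(G)$ has at least $k$ eigenvalues (counted with multiplicity) that are greater than or equal to $d$.
   Context: All graphs are finite, simple, unweighted and undirected; $A(G)$ is the adjacency matrix and $L(G)=D(G)-A(G)$ the Laplacian, where $D(G)$ is the diagonal matrix of degrees. For a positive integer $k$, $NPO(k)$ is the smallest integer $n$ such that the adjacency matrix of every graph with at least $n$ vertices has at least $k$ nonpositive eigenvalues (counted with multiplicity). *)

(* Defs.v *)
(* Eigenvalues are taken in algC (algebraic complex numbers),
   as roots (with multiplicity) of the characteristic polynomial. *)
From HB Require Import structures.
From mathcomp Require Import all_boot all_order all_algebra all_field.
Set Implicit Arguments. Unset Strict Implicit. Unset Printing Implicit Defensive.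
Import Order.TTheory GRing.Theory Num.Theory.
Local Open Scope ring_scope.

Definition simple_graph (n : nat) (e : rel 'I_n) : Prop :=
  symmetric e /\ irreflexive e.

Definition deg (n : nat) (e : rel 'I_n) (i : 'I_n) : nat := #|[set j | e i j]|.

Definition regular (n : nat) (e : rel 'I_n) (d : nat) : Prop :=
  forall i : 'I_n, deg e i = d.

Definition adjmx (n : nat) (e : rel 'I_n) : 'M[algC]_n :=
  \matrix_(i, j) (e i j)%:R.

Definition degmx (n : nat) (e : rel 'I_n) : 'M[algC]_n :=
  \matrix_(i, j) ((i == j)%:R * (deg e i)%:R).

Definition laplacian (n : nat) (e : rel 'I_n) : 'M[algC]_n :=
  degmx e - adjmx e.

Definition at_least_eigs (n : nat) (M : 'M[algC]_n) (P : pred algC) (k : nat)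
  : Prop :=
  exists rs : seq algC,
    char_poly M = \prod_(z <- rs) ('X - z%:P) /\ (k <= count P rs)%N.

Definition npo_prop (k m : nat) : Prop :=
  forall (N : nat) (e : rel 'I_N), (m <= N)%N -> simple_graph e ->
    at_least_eigs (adjmx e) (fun x => x <= 0) k.

Definition is_NPO (k m : nat) : Prop :=
  npo_prop k m /\ forall m' : nat, npo_prop k m' -> (m <= m')%N.

(* Main.v *)
Require Import Defs.
From HB Require Import structures.
From mathcomp Require Import all_boot all_order all_algebra all_field.
From mathcomp Require Import ring.
Import Order.TTheory GRing.Theory Num.Theory.
Local Open Scope ring_scope.

Lemma lap_reg (n d : nat) (e : rel 'I_n) :
  regular e d -> laplacian e = (d%:R : algC)%:M - adjmx e.
Proof.
move=> reg; rewrite /laplacian; congr (_ - _).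
apply/matrixP => i j; rewrite !mxE reg.
by case: (i == j); rewrite ?mul1r ?mul0r.
Qed.

Lemma charpoly_shift (n : nat) (c : algC) (A : 'M[algC]_n) :
  char_poly (c%:M - A) = (- 1) ^+ n * comp_poly (c%:P - 'X) (char_poly A).
Proof.
rewrite /char_poly -det_map_mx -detZ; congr (\det _).
rewrite /char_poly_mx.
apply/matrixP => i j; rewrite !mxE.
rewrite /= ?comp_polyC ?comp_polyX ?comp_polyB ?comp_polyD ?comp_polyN.
case: (i == j); rewrite /= ?mulr1n ?mulr0n;
  rewrite ?comp_polyX ?comp_poly0 ?comp_polyC ?polyCB ?polyCN ?polyC0; ring.
Qed.

Theorem mainTheorem18 (n d k a b : nat) (e : rel 'I_n) :
  simple_graph e -> regular e d -> (0 < k)%N ->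
  is_NPO k a -> is_NPO k.+1 b -> (a <= n)%N -> (n < b)%N ->
  at_least_eigs (laplacian e) (fun x => d%:R <= x) k.
Proof.
move=> sg reg _ [npo _] _ han _.
have [rs [hch hk]] := npo n e han sg.
exists (map (fun z => d%:R - z) rs); split.
  rewrite (@lap_reg n d e reg) charpoly_shift hch.
  have hs : size rs = n.
    have := size_char_poly (adjmx e); rewrite hch size_prod_XsubC.
    by case.
  rewrite rmorph_prod big_map.
  rewrite -hs; elim: rs {hch hk hs} => [|z s IH]; first by rewrite !big_nil expr0 mulr1.
  rewrite !big_cons /= exprS -mulrA.
  have -> : ('X - z%:P) \Po (d%:R%:P - 'X) = - ('X - (d%:R - z)%:P).
    by rewrite comp_polyB comp_polyX comp_polyC polyCB; ring.
  rewrite -IH; ring.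
rewrite count_map; apply: (leq_trans hk); rewrite leq_eqVlt; apply/orP; left.
apply/eqP/eq_count => z /=.
by rewrite lerDl oppr_ge0.
Qed.
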